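(* Let $f\in C^1(\mathbb{R}^n,\mathbb{R}^n)$ and let $x_0$ be a nondegenerate $T$-periodic limit cycle of $\dot x=f(x)$, $T>0$. Assume that the adjoint system $\dot z=-(f'(x_0(t)))^*z$ has $n$ linearly independent eigenfunctions, namely $z_1,\dots,z_{n-1}$, which are not $T$-periodic, and a $T$-periodic eigenfunction $z_0$ normalized so that $\langle\dot x_0(0),z_0(0)\rangle=1$. Then for every $t\in\mathbb{R}$ the last column of the matrix $\big((z_1(t),\dots,z_{n-1}(t),z_0(t))^{-1}\big)^*$ equals $\dot x_0(t)$.
   Context: Nondegenerate: the characteristic multiplier $+1$ of the linearized system $\dot y=f'(x_0(t))y$ (eigenvalue $1$ of $Y(T)$, $Y$ the fundamental matrix with $Y(0)=I$) has algebraic multiplicity $1$. An eigenfunction of a linear $T$-periodic system is a nonzero solution $z$ with $z(t+T)=\rho z(t)$ for all $t\in\mathbb{R}$ and some $\rho\in\mathbb{R}$. $^*$ denotes transpose; $(z_1(t),\dots,z_{n-1}(t),z_0(t))$ is the $n\times n$ matrix with these columns. *)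

(* Defs.v *)
(* Phase space R^n is rendered as row
   vectors 'rV[R]_n (the convention of MathComp-Analysis' jacobian 'J, which
   satisfies 'D_v f a = v *m 'J f a, so that the usual Jacobian matrix f'(a)
   is ('J f a)^T). *)
From mathcomp Require Import all_boot all_order all_algebra all_classical all_reals all_analysis.
Set Implicit Arguments. Unset Strict Implicit. Unset Printing Implicit Defensive.
Import numFieldNormedType.Exports.
Import Order.TTheory GRing.Theory Num.Theory.
Local Open Scope ring_scope.
Local Open Scope classical_set_scope.

Definition is_C1 {R : realType} {n : nat} (f : 'rV[R]_n -> 'rV[R]_n) : Prop :=
  (forall x, differentiable f x) /\ continuous (fun x : 'rV[R]_n => 'J f x).

Definition is_solution {R : realType} {n : nat}
  (f : 'rV[R]_n -> 'rV[R]_n) (x : R -> 'rV[R]_n) : Prop :=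
  forall t : R, is_derive t (1 : R) x (f (x t)).

Definition is_periodic {R : realType} {V : Type} (T : R) (x : R -> V) : Prop :=
  forall t, x (t + T) = x t.

Definition periodic_solution {R : realType} {n : nat}
  (f : 'rV[R]_n -> 'rV[R]_n) (y : R -> 'rV[R]_n) : Prop :=
  is_solution f y /\ (exists t s, y t != y s) /\
  exists S : R, 0 < S /\ is_periodic S y.

Definition limit_cycle {R : realType} {n : nat}
  (f : 'rV[R]_n -> 'rV[R]_n) (x0 : R -> 'rV[R]_n) (T : R) : Prop :=
  0 < T /\ is_solution f x0 /\ is_periodic T x0 /\ (exists t s, x0 t != x0 s) /\
  exists e : R, 0 < e /\
    forall y, periodic_solution f y ->
      (forall t, exists s, `|y t - x0 s| < e) -> range y = range x0.

Definition jac {R : realType} {n : nat} (f : 'rV[R]_n -> 'rV[R]_n) (a : 'rV[R]_n)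
  : 'M[R]_n := ('J f a)^T.

(* Nondegeneracy: the fundamental matrix Y of y' = f'(x0 t) y with Y(0) = I
   has the characteristic multiplier 1 (eigenvalue 1 of Y(T)) with algebraic
   multiplicity 1. *)
Definition nondegenerate_cycle {R : realType} {n : nat}
  (f : 'rV[R]_n -> 'rV[R]_n) (x0 : R -> 'rV[R]_n) (T : R) : Prop :=
  exists Y : R -> 'M[R]_n,
    (forall t : R, is_derive t (1 : R) Y (jac f (x0 t) *m Y t)) /\ Y 0 = 1%:M /\
    mup 1 (char_poly (Y T)) = 1%N.

(* z (a row vector standing for the column vector z(t)) solves the adjoint
   system z' = -(f'(x0 t))^* z, i.e. in row form z' = - z *m f'(x0 t). *)
Definition adjoint_solution {R : realType} {n : nat}
  (f : 'rV[R]_n -> 'rV[R]_n) (x0 : R -> 'rV[R]_n) (z : R -> 'rV[R]_n) : Prop :=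
  forall t : R, is_derive t (1 : R) z (- (z t *m jac f (x0 t))).

Definition adjoint_eigenfunction {R : realType} {n : nat}
  (f : 'rV[R]_n -> 'rV[R]_n) (x0 : R -> 'rV[R]_n) (T : R) (z : R -> 'rV[R]_n) : Prop :=
  adjoint_solution f x0 z /\ (exists t, z t != 0) /\
  exists rho : R, forall t, z (t + T) = rho *: z t.

Definition col_matrix {R : realType} {n : nat} (zs : 'I_n -> R -> 'rV[R]_n) (t : R)
  : 'M[R]_n := \matrix_(i < n, j < n) zs j t 0 i.

Definition dotv {R : realType} {n : nat} (u v : 'rV[R]_n) : R :=
  \sum_(i < n) u 0 i * v 0 i.

(* Main.v *)
Require Import Defs.
From mathcomp Require Import all_boot all_order all_algebra all_classical all_reals all_analysis.
From mathcomp Require Import ring lra.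
Import numFieldNormedType.Exports.
Import Order.TTheory GRing.Theory Num.Theory.
Local Open Scope ring_scope.

Section H.
Variable R : realType.
Local Open Scope classical_set_scope.

Lemma is_derive_coord n (u : R -> 'rV[R]_n) t du i :
  is_derive t (1:R) u du -> is_derive t (1:R) (fun s => u s 0 i) (du 0 i).
Proof.
case=> ud <-.
have L : (fun h : R => h^-1 *: ((fun s => u s 0 i) (h *: 1 + t) - u t 0 i)) @ 0^'
   --> ('D_1 u t) 0 i.
  have -> : (fun h : R => h^-1 *: ((fun s => u s 0 i) (h *: 1 + t) - u t 0 i)) =
     (fun M : 'rV[R]_n => M 0 i) \o (fun h : R => h^-1 *: (u (h *: 1 + t) - u t)).
    by apply/funext => h /=; rewrite !mxE.
  apply: cvg_comp; first exact: ud.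
  exact: coord_continuous.
apply: DeriveDef; first by apply/cvg_ex; eexists; exact: L.
exact: cvg_lim L.
Qed.

Lemma is_derive_comp_J n (f : 'rV[R]_n -> 'rV[R]_n) (x : R -> 'rV[R]_n) t dx :
  differentiable f (x t) -> is_derive t (1:R) x dx ->
  is_derive t (1:R) (f \o x) (dx *m 'J f (x t)).
Proof.
move=> df [xd <-].
have dxd : differentiable x t by apply/derivable1_diffP.
have dc := differentiable_comp dxd df.
apply: DeriveDef; first exact: diff_derivable.
rewrite deriveE // diff_comp //= -deriveE // -deriveEjacobian //.
by rewrite -deriveE.
Qed.

Lemma is_derive_dotv n (u v : R -> 'rV[R]_n) t du dv :
  is_derive t (1:R) u du -> is_derive t (1:R) v dv ->
  is_derive t (1:R) (fun s => dotv (u s) (v s)) (dotv (u t) dv + dotv du (v t)).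
Proof.
move=> hu hv.
have -> : (fun s => dotv (u s) (v s)) =
   \sum_(i < n) ((fun s => u s 0 i) * (fun s => v s 0 i)).
  by apply/funext => s; rewrite fct_sumE /dotv.
have H := @is_derive_sum R R R n (fun i => (fun s => u s 0 i) * (fun s => v s 0 i)) t 1
  (fun i => u t 0 i *: dv 0 i + v t 0 i *: du 0 i)
  (fun i => is_deriveM (is_derive_coord _ _ _ _ i hu) (is_derive_coord _ _ _ _ i hv)).
apply: is_derive_eq H _.
rewrite /dotv -big_split /=; apply: eq_bigr => i _.
by rewrite [du 0 i * _]mulrC.
Qed.

Lemma cont_sum n (F : 'I_n -> R -> R) :
  (forall i, continuous (F i)) -> continuous (fun t => \sum_(i < n) F i t).
Proof.
move=> Fc.
have -> : (fun t => \sum_(i < n) F i t) = \sum_(i < n) F i by rewrite fct_sumE.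
elim/big_ind: _ => //.
- by move=> x; apply: cvg_cst.
- by move=> f g fc gc x; apply: cvgD; [exact: fc|exact: gc].
Qed.

Lemma sq_le_dotv n (u : 'rV[R]_n) k : u 0 k * u 0 k <= dotv u u.
Proof.
rewrite /dotv (bigD1 k) //= lerDl.
by apply: sumr_ge0 => i _; rewrite -expr2 sqr_ge0.
Qed.

Lemma dotv_ge0 n (u : 'rV[R]_n) : 0 <= dotv u u.
Proof. by apply: sumr_ge0 => i _; rewrite -expr2 sqr_ge0. Qed.

Lemma dotv_bound n (u : 'rV[R]_n) (B : 'M[R]_n) :
  `|dotv u (u *m B)| <= (\sum_(i < n) \sum_(j < n) `|B i j|) * dotv u u.
Proof.
have key : forall k l, `|u 0 k| * `|u 0 l| <= dotv u u.
  move=> k l.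
  have hk := sq_le_dotv _ u k; have hl := sq_le_dotv _ u l.
  have ek : `|u 0 k| * `|u 0 k| = u 0 k * u 0 k by rewrite -normrM ger0_norm // -expr2 sqr_ge0.
  have el : `|u 0 l| * `|u 0 l| = u 0 l * u 0 l by rewrite -normrM ger0_norm // -expr2 sqr_ge0.
  have := normr_ge0 (u 0 k); have := normr_ge0 (u 0 l).
  case: (leP `|u 0 k| `|u 0 l|) => h0 h1 h2; nra.
have -> : dotv u (u *m B) = \sum_(k < n) u 0 k * \sum_(l < n) u 0 l * B l k.
  by rewrite /dotv; apply: eq_bigr => k _; rewrite mxE.
apply: (le_trans (ler_norm_sum _ _ _)).
rewrite exchange_big /= mulr_suml; apply: ler_sum => k _.
rewrite normrM.
apply: (le_trans (ler_wpM2l (normr_ge0 _) (ler_norm_sum _ _ _))).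
rewrite mulr_sumr mulr_suml; apply: ler_sum => l _.
rewrite normrM mulrA [X in _ <= X]mulrC; apply: ler_wpM2r => //.
Qed.

Lemma is_derive_phi (g : R -> R) dg K s :
  is_derive s (1:R) g dg ->
  is_derive s (1:R) (fun s => g s * expR (K * s)) (expR (K * s) * (dg + K * g s)).
Proof.
move=> hg.
have hl : is_derive s (1:R) (fun s : R => K * s) K.
  have H := @is_deriveZ R R^o R^o id K s 1 1 (@is_derive_id R R^o s 1).
  have -> : (fun s : R => K * s) = K \*: (id : R^o -> R^o) by [].
  by apply: is_derive_eq H _; rewrite /GRing.scale /= mulr1.
have he : is_derive s (1:R) (expR \o (fun s : R => K * s)) (expR (K * s) * K).
  exact: is_derive1_comp.
have H := is_deriveM hg he.
apply: is_derive_eq H _.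
rewrite /GRing.scale /=; lra.
Qed.

Lemma dotvC n (a b : 'rV[R]_n) : dotv a b = dotv b a.
Proof. by apply: eq_bigr => i _; rewrite mulrC. Qed.

Lemma lin_uniq n (B : R -> 'M[R]_n) (u : R -> 'rV[R]_n) t0 :
  (forall i j, continuous (fun t => B t i j)) ->
  (forall t, is_derive t (1:R) u (u t *m B t)) -> u t0 = 0 -> forall t, u t = 0.
Proof.
move=> Bc ud u0 t1.
pose g s := dotv (u s) (u s).
pose dg s := dotv (u s) (u s *m B s) + dotv (u s *m B s) (u s).
have gd : forall s, is_derive s (1:R) g (dg s).
  by move=> s; exact: (is_derive_dotv _ u u s _ _ (ud s) (ud s)).
pose h s := \sum_(i < n) \sum_(j < n) `|B s i j|.
have hc : continuous h.
  apply: (cont_sum _ (fun i s => \sum_(j < n) `|B s i j|)) => i.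
  apply: (cont_sum _ (fun j s => `|B s i j|)) => j.
  by move=> s; apply: cvg_norm; exact: Bc.
have gge : forall s, 0 <= g s by move=> s; exact: dotv_ge0.
have bnd : forall s, `|dg s| <= 2 * h s * g s.
  move=> s; rewrite /dg [dotv (u s *m B s) _]dotvC -mulr2n normrMn mulr2n.
  have := dotv_bound _ (u s) (B s); rewrite -/(g s) -/(h s) => hb; nra.
have g0 : g t0 = 0.
  by rewrite /g u0 /dotv big1 // => i _; rewrite mxE mul0r.
suff gt1 : g t1 = 0.
  apply/rowP => k; rewrite mxE.
  have := sq_le_dotv _ (u t1) k; rewrite -/(g t1) gt1 => hk; nra.
have cphi : forall K (a b : R), {within `[a, b], continuous (fun s => g s * expR (K * s))}.
  move=> K a b; apply/continuous_subspaceT => x.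
  apply/differentiable_continuous/derivable1_diffP.
  by case: (is_derive_phi g (dg x) K x (gd x)).
case: (leP t0 t1) => ht.
- have [c _ hM] := EVT_max ht (continuous_subspaceT hc).
  pose K := - (2 * h c).
  have H : g t1 * expR (K * t1) <= g t0 * expR (K * t0).
    apply: (@ler0_derive1_nincr R (fun s => g s * expR (K * s)) t0 t1 _ _ (cphi K t0 t1) t0 t1 (lexx _) ht (lexx _)).
    - by move=> x _; case: (is_derive_phi g (dg x) K x (gd x)).
    - move=> x; rewrite in_itv /= => /andP[xa xb].
      rewrite derive1E; have [_ ->] := is_derive_phi g (dg x) K x (gd x).
      have hx := hM x; rewrite in_itv /= (ltW xa) (ltW xb) in hx.
      have := hx isT; have bx := bnd x; have ex := expR_gt0 (K * x); have gx := gge x.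
      have := ler_norm (dg x) => n1 hh.
      have hneg : dg x + K * g x <= 0 by rewrite /K; nra.
      by rewrite pmulr_rle0.
  rewrite g0 mul0r in H; have := expR_gt0 (K * t1); have := gge t1; nra.
- have [c _ hM] := EVT_max (ltW ht) (continuous_subspaceT hc).
  pose K := 2 * h c.
  have H : g t1 * expR (K * t1) <= g t0 * expR (K * t0).
    apply: (@ger0_derive1_ndecr R (fun s => g s * expR (K * s)) t1 t0 _ _ (cphi K t1 t0) t1 t0 (lexx _) (ltW ht) (lexx _)).
    - by move=> x _; case: (is_derive_phi g (dg x) K x (gd x)).
    - move=> x; rewrite in_itv /= => /andP[xa xb].
      rewrite derive1E; have [_ ->] := is_derive_phi g (dg x) K x (gd x).
      have hx := hM x; rewrite in_itv /= (ltW xa) (ltW xb) in hx.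
      have := hx isT; have bx := bnd x; have ex := expR_gt0 (K * x); have gx := gge x.
      have := ler_norm (- dg x); rewrite normrN => n1 hh.
      have hneg : 0 <= dg x + K * g x by rewrite /K; nra.
      by rewrite pmulr_rge0.
  rewrite g0 mul0r in H; have := expR_gt0 (K * t1); have := gge t1; nra.
Qed.

Lemma dotv_mx n (a b : 'rV[R]_n) : dotv a b = (a *m b^T) 0 0.
Proof. by rewrite mxE; apply: eq_bigr => i _; rewrite mxE. Qed.

Lemma dotvZ n (a b : 'rV[R]_n) (r : R) : dotv a (r *: b) = r * dotv a b.
Proof. by rewrite /dotv mulr_sumr; apply: eq_bigr => i _; rewrite mxE mulrCA. Qed.
End H.

Theorem lemma3 (R : realType) (m : nat) (f : 'rV[R]_m.+1 -> 'rV[R]_m.+1)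
  (x0 : R -> 'rV[R]_m.+1) (T : R) (zs : 'I_m.+1 -> R -> 'rV[R]_m.+1) :
  is_C1 f ->
  limit_cycle f x0 T ->
  nondegenerate_cycle f x0 T ->
  (forall i, adjoint_eigenfunction f x0 T (zs i)) ->
  (forall c : 'I_m.+1 -> R, (forall t, \sum_(i < m.+1) c i *: zs i t = 0) ->
     forall i, c i = 0) ->
  (forall i : 'I_m.+1, i != ord_max -> ~ is_periodic T (zs i)) ->
  is_periodic T (zs ord_max) ->
  dotv (derive1 x0 0) (zs ord_max 0) = 1 ->
  forall t : R, col ord_max ((invmx (col_matrix zs t))^T) = (derive1 x0 t)^T.
Proof.
move=> [fd Jc] [Tpos [xsol [xper _]]] _ zeig indep nonper zper norm1 t.
have xdE : forall s, derive1 x0 s = f (x0 s).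
  by move=> s; rewrite derive1E; have [_ ->] := xsol s.
have xdd : forall s, is_derive s (1:R) (f \o x0) (f (x0 s) *m 'J f (x0 s)).
  by move=> s; apply: is_derive_comp_J; [exact: fd | exact: xsol].
have cst : forall j s, dotv (f (x0 s)) (zs j s) = dotv (f (x0 0)) (zs j 0).
  move=> j s.
  have [zsol _] := zeig j.
  apply: (@is_derive_0_is_cst R (fun s => dotv ((f \o x0) s) (zs j s))) => r.
  have H := is_derive_dotv _ _ _ _ r _ _ (xdd r) (zsol r).
  apply: is_derive_eq H _.
  rewrite !dotv_mx /jac /= linearN /= trmx_mul trmxK mulmxN mulmxA !mxE.
  by rewrite addNr.
have key : forall j s, dotv (f (x0 s)) (zs j s) = (j == ord_max)%:R.
  move=> j s; rewrite cst.
  have [_ [_ [rho hrho]]] := zeig j.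
  have hT := cst j T.
  rewrite -[T]add0r xper hrho dotvZ in hT.
  case: eqP => [->|/eqP jn].
    by rewrite -xdE.
  have [c0|cn0] := eqVneq (dotv (f (x0 0)) (zs j 0)) 0; first by [].
  exfalso; apply: (nonper j jn) => r.
  have rho1 : rho = 1.
    by apply: (mulIf cn0); rewrite mul1r.
  by rewrite hrho rho1 scale1r.
have x0c : continuous x0.
  move=> s; apply/differentiable_continuous/derivable1_diffP.
  by case: (xsol s).
have Bc : forall i j, continuous (fun r => (- jac f (x0 r)) i j).
  move=> i j r.
  have -> : (fun r => (- jac f (x0 r)) i j) = (fun r => - ('J f (x0 r) j i)).
    by apply/funext => r'; rewrite !mxE.
  apply: cvgN.
  apply: (@continuous_comp _ _ _ x0 (fun M => 'J f M j i)); first exact: x0c.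
  apply: (@continuous_comp _ _ _ (jacobian f) (fun M : 'M[R]_m.+1 => M j i)).
    exact: Jc.
  exact: coord_continuous.
have Zu : forall s, col_matrix zs s \in unitmx.
  move=> s; rewrite unitmxE unitfE -det_tr; apply/negP => /det0P [v vn0 hv].
  pose u r := \sum_(j < m.+1) v 0 j *: zs j r.
  have ud : forall r, is_derive r (1:R) u (u r *m (- jac f (x0 r))).
    move=> r.
    have -> : u = \sum_(j < m.+1) (v 0 j \*: zs j).
      by apply/funext => r'; rewrite fct_sumE.
    have H := @is_derive_sum R R^o _ m.+1 (fun j => v 0 j \*: zs j) r 1
      (fun j => v 0 j *: (- (zs j r *m jac f (x0 r))))
      (fun j => is_deriveZ (v 0 j) ((zeig j).1 r)).
    apply: is_derive_eq H _.
    rewrite fct_sumE mulmx_suml; apply: eq_bigr => j _ /=.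
    by rewrite -scalemxAl mulmxN.
  have us : u s = 0.
    apply/rowP => k; rewrite [RHS]mxE /u summxE.
    have := congr1 (fun M : 'rV[R]_m.+1 => M 0 k) hv; rewrite /= [RHS]mxE mxE => e.
    apply: (etrans _ e); by apply: eq_bigr => j _; rewrite !mxE.
  have u0 := lin_uniq _ _ _ u s Bc ud us.
  have vz := indep (fun j => v 0 j) u0.
  move/negP: vn0; apply; apply/eqP/rowP => j.
  by rewrite vz mxE.
have hZ : f (x0 t) *m col_matrix zs t = delta_mx 0 ord_max.
  apply/rowP => j; rewrite !mxE /= -(key j t) /dotv.
  by apply: eq_bigr => k _; rewrite !mxE.
rewrite -tr_row xdE rowE -hZ mulmxK //.
Qed.
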